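(* Let $\vec B=(b_0,\dots,b_{N-1})$ be a binary digit vector of length $N$ (scale factor $N$). Then $\vec B$ is uniquely determined by the values $\{F_{\vec B}(k/N)\}_{k=1}^{N-1}$; i.e., if $\vec B,\vec C$ are binary digit vectors both of length $N$ with $F_{\vec B}(k/N)=F_{\vec C}(k/N)$ for $k=1,\dots,N-1$, then $\vec B=\vec C$.
   Context: A binary digit vector of length (scale factor) $N\ge3$ is $\vec B=(b_0,\dots,b_{N-1})\in\{0,1\}^N$ with $2\le\|\vec B\|:=\sum_i b_i\le N-1$; its digit set is $D=\{i:b_i=1\}$. With $\phi_d(x)=(x+d)/N$ for $d\in D$, let $\mu_{\vec B}$ be the unique Borel probability measure with $\mu_{\vec B}=\frac{1}{\|\vec B\|}\sum_{d\in D}\mu_{\vec B}\circ\phi_d^{-1}$, supported on the attractor $C_{\vec B}\subset[0,1]$. The CDF is $F_{\vec B}(x)=\mu_{\vec B}([0,x])$, $x\in[0,1]$. *)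

(* Defs.v *)
From HB Require Import structures.
From mathcomp Require Import all_boot all_order all_algebra.
From mathcomp Require Import all_classical all_reals all_analysis.
Set Implicit Arguments. Unset Strict Implicit. Unset Printing Implicit Defensive.
Import Order.TTheory GRing.Theory Num.Theory.
Local Open Scope classical_set_scope.
Local Open Scope ring_scope.

(* A binary digit vector of length N is B : {ffun 'I_N -> bool};
   b_i = 1 iff B i = true.  Its digit set is D = [set i | B i]. *)
Definition digit_norm (N : nat) (B : {ffun 'I_N -> bool}) : nat :=
  #|[set i | B i]|.

Definition is_digit_vector (N : nat) (B : {ffun 'I_N -> bool}) : bool :=
  [&& 3 <= N, 2 <= digit_norm B & digit_norm B <= N.-1]%N.

Definition phi (R : realType) (N d : nat) (x : R) : R := (x + d%:R) / N%:R.

Definition self_similar (R : realType) (N : nat) (B : {ffun 'I_N -> bool})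
  (mu : probability R R) : Prop :=
  forall A : set R, measurable A ->
    mu A = (((digit_norm B)%:R^-1)%:E *
           \sum_(d < N | B d) mu (phi N d @^-1` A))%E.

Definition cdf_mu (R : realType) (mu : probability R R) (x : R) : \bar R :=
  mu `[0, x]%classic.

(* Main.v *)
Require Import Defs.
From HB Require Import structures.
From mathcomp Require Import all_boot all_order all_algebra.
From mathcomp Require Import all_classical all_reals all_analysis.
From mathcomp Require Import ring lra zify measurable_realfun.
Import Order.TTheory GRing.Theory Num.Theory numFieldNormedType.Exports.
Local Open Scope classical_set_scope.
Local Open Scope ring_scope.

Lemma meas_pre (R : realType) (N d : nat) (A : set R) :
  measurable A -> measurable (phi N d @^-1` A).
Proof.
move=> mA.
have cf : continuous (phi (R:=R) N d : R -> R).
  move=> x; rewrite /phi; apply: cvgM; last exact: cvg_cst.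
  by apply: cvgD; [exact: cvg_id | exact: cvg_cst].
have := continuous_measurable_fun cf measurableT mA.
by rewrite setTI.
Qed.

Arguments meas_pre {R N d A}.

Definition pm (R : realType) (mu : probability R R) (A : set R) : R := fine (mu A).
Arguments pm {R}.

Lemma pmE (R : realType) (mu : probability R R) A : measurable A -> mu A = (pm mu A)%:E.
Proof. by move=> mA; rewrite /pm fineK // fin_num_measure. Qed.

Arguments pmE {R mu A}.

Lemma pm_ge0 (R : realType) (mu : probability R R) A : 0 <= pm mu A.
Proof. by rewrite /pm fine_ge0 // measure_ge0. Qed.

Lemma pm_le (R : realType) (mu : probability R R) A B' :
  measurable A -> measurable B' -> A `<=` B' -> pm mu A <= pm mu B'.
Proof.
move=> mA mB AB; rewrite -lee_fin -!pmE //.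
by apply: le_measure => //; rewrite inE.
Qed.

Lemma pmT (R : realType) (mu : probability R R) : pm mu setT = 1.
Proof. by rewrite /pm probability_setT. Qed.

Arguments pmT {R}.
Arguments pm_ge0 {R}.

Lemma ss_real (R : realType) (N : nat) (B : {ffun 'I_N -> bool}) (mu : probability R R) A :
  self_similar B mu -> measurable A ->
  pm mu A = (digit_norm B)%:R^-1 * \sum_(d < N | B d) pm mu (phi N d @^-1` A).
Proof.
move=> ss mA; have := ss A mA.
rewrite pmE //.
rewrite (eq_bigr (fun d : 'I_N => (pm mu (phi N d @^-1` A))%:E)); last first.
  by move=> d _; rewrite -pmE //; exact: meas_pre.
rewrite sumEFin -EFinM; by case.
Qed.

Lemma dnE (N : nat) (B : {ffun 'I_N -> bool}) :
  digit_norm B = #|[pred i | B i]|.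
Proof.
rewrite /digit_norm; apply: eq_card => i; rewrite inE.
by apply/idP/idP => [/set_mem|h]; [|apply: mem_set].
Qed.

Arguments ss_real {R N B mu A}.

Lemma sum_cst_B (R : realType) (N : nat) (B : {ffun 'I_N -> bool}) (M : R) :
  \sum_(d < N | B d) M = M * (digit_norm B)%:R.
Proof.
rewrite (eq_bigl (fun i => i \in [pred i | B i])); last by move=> i; rewrite inE.
by rewrite sumr_const mulr_natr dnE.
Qed.

Lemma avg_le (R : realType) (N : nat) (B : {ffun 'I_N -> bool}) (x M : R) (t : 'I_N -> R) :
  (0 < digit_norm B)%N ->
  x = (digit_norm B)%:R^-1 * \sum_(d < N | B d) t d ->
  (forall d, B d -> t d <= M) -> x <= M.
Proof.
move=> n0 -> H.
have np : 0 < (digit_norm B)%:R :> R by rewrite ltr0n.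
rewrite mulrC ler_pdivrMr //.
by rewrite -sum_cst_B; apply: ler_sum.
Qed.

Arguments avg_le {R N B x M t}.

Lemma avg_eq (R : realType) (N : nat) (B : {ffun 'I_N -> bool}) (x : R) (t : 'I_N -> R) :
  (0 < digit_norm B)%N ->
  x = (digit_norm B)%:R^-1 * \sum_(d < N | B d) t d ->
  (forall d, B d -> t d <= x) -> forall d, B d -> t d = x.
Proof.
move=> n0 hx H d Bd.
have np : 0 < (digit_norm B)%:R :> R by rewrite ltr0n.
have hs : \sum_(d < N | B d) (x - t d) = 0.
  by rewrite sumrB sum_cst_B {1}hx mulrAC mulVf ?mul1r ?subrr // gt_eqF.
have h0 : forall i, B i -> 0 <= x - t i by move=> i Bi; rewrite subr_ge0 H.
have := psumr_eq0P h0 hs Bd.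
by move/eqP; rewrite subr_eq0 => /eqP.
Qed.

Arguments avg_eq {R N B x t}.

Lemma lim0 (R : realType) (mu : probability R R) (F : nat -> set R) (c : R) :
  (forall m, measurable (F m)) ->
  (forall n m, (n <= m)%N -> F m `<=` F n) ->
  \bigcap_m F m = set0 ->
  (forall m, c <= pm mu (F m)) -> c <= 0.
Proof.
move=> mF dF capF cF.
have h := @nonincreasing_cvg_mu _ _ _ mu F.
have : mu \o F @ \oo --> mu (\bigcap_n F n).
  apply: h => //.
  - exact: (le_lt_trans (probability_le1 mu (mF 0%N)) (ltry _)).
  - by rewrite capF.
  - by move=> n m nm; apply/subsetPset; exact: dF.
rewrite capF measure0 => cv.
have : (c%:E <= lim (mu \o F @ \oo))%E.
  apply: lime_ge; first by apply/cvg_ex; exists 0%E.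
  by apply: nearW => m /=; rewrite (pmE (mF m)) lee_fin.
by rewrite (cvg_lim _ cv) // lee_fin.
Qed.

Lemma natle (R : realType) (a b c : nat) : (a + b <= c)%N -> a%:R + b%:R <= c%:R :> R.
Proof. by rewrite -natrD ler_nat. Qed.

Lemma two_digits (N : nat) (B : {ffun 'I_N -> bool}) :
  is_digit_vector B -> exists d1 d2 : 'I_N, [/\ B d1, B d2 & d1 != d2].
Proof.
case/and3P => _ n2 _.
have : (1 < #|[pred i | B i]|)%N by rewrite -dnE.
by case/card_gt1P => x [y [hx hy xy]]; exists x, y; split.
Qed.

Lemma digit_lt (N : nat) (B : {ffun 'I_N -> bool}) :
  is_digit_vector B -> exists d : 'I_N, B d /\ (d + 2 <= N)%N.
Proof.
move=> dv; have [d1 [d2 [B1 B2 d12]]] := two_digits _ _ dv.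
have l1 := ltn_ord d1; have l2 := ltn_ord d2.
case: (eqVneq (nat_of_ord d1) N.-1) => h1.
  exists d2; split => //.
  have : nat_of_ord d2 != N.-1 by rewrite -h1; apply: contra d12 => /eqP/val_inj ->.
  move/eqP; lia.
by exists d1; split => //; move/eqP: h1; lia.
Qed.

Lemma digit_gt (N : nat) (B : {ffun 'I_N -> bool}) :
  is_digit_vector B -> exists d : 'I_N, B d /\ (1 <= d)%N.
Proof.
move=> dv; have [d1 [d2 [B1 B2 d12]]] := two_digits _ _ dv.
case: (eqVneq (nat_of_ord d1) 0%N) => h1.
  exists d2; split => //.
  have : nat_of_ord d2 != 0%N by rewrite -h1; apply: contra d12 => /eqP/val_inj ->.
  move/eqP; lia.
by exists d1; split => //; move/eqP: h1; lia.
Qed.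

Lemma right_tail (R : realType) (N : nat) (B : {ffun 'I_N -> bool}) (mu : probability R R) :
  is_digit_vector B -> self_similar B mu -> pm mu `]1, +oo[%classic = 0.
Proof.
move=> dv ss.
have /and3P [N3 n2 nN] := dv.
have N0 : 0 < N%:R :> R by rewrite ltr0n; lia.
have n0 : (0 < digit_norm B)%N by lia.
pose g := fun a : R => pm mu `]a, +oo[%classic.
have mg (a : R) : measurable (`]a, +oo[%classic : set R) by exact: measurable_itv.
have gmono (a b : R) : a <= b -> g b <= g a.
  move=> ab; apply: pm_le => // x /=; rewrite !in_itv /= !andbT; exact: le_lt_trans.
have pre (a : R) (d : 'I_N) : phi N d @^-1` `]a, +oo[%classic = `]a * N%:R - d%:R, +oo[%classic.
  by rewrite predeqE => x /=; rewrite !in_itv /= !andbT /phi ltr_pdivlMr // ltrBlDr.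
have gss (a : R) : g a = (digit_norm B)%:R^-1 * \sum_(d < N | B d) g (a * N%:R - d%:R).
  by rewrite /g (ss_real ss) //; congr (_ * _); apply: eq_bigr => d _; rewrite pre.
have dle (d : 'I_N) : d%:R + 1 <= N%:R :> R.
  by apply: (natle R d 1); have := ltn_ord d; lia.
have step (a : R) : g a <= g (a * N%:R - N%:R + 1).
  apply: (avg_le n0 (gss a)) => d _; apply: gmono.
  have := dle d; lra.
have iter k : g 2 <= g (1 + (N ^ k)%:R).
  elim: k => [|k IH]; first by rewrite expn0.
  apply: (le_trans IH); apply: (le_trans (step _)).
  have -> : (1 + (N ^ k)%:R) * N%:R - N%:R + 1 = 1 + (N ^ k.+1)%:R :> R.
    by rewrite expnS natrM; ring.
  by [].
have gk (m : nat) : g 2 <= g m%:R.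
  apply: (le_trans (iter m)); apply: gmono.
  have : (m < N ^ m)%N by apply: ltn_expl; lia.
  rewrite -(ltr_nat R) => h; lra.
have g2 : g 2 <= 0.
  apply: (@lim0 R mu (fun m => `]m%:R, +oo[%classic)) => //.
  - move=> n m nm x /=; rewrite !in_itv /= !andbT => h; apply: le_lt_trans h.
    by rewrite ler_nat.
  - rewrite predeqE => x; split => // h.
    have := h (Num.Def.archi_bound `|x|) I; rewrite /= in_itv /= andbT.
    have := archi_boundP (normr_ge0 x); have := ler_norm x; lra.
have [d [Bd dl]] := digit_lt _ _ dv.
have hle : forall d' : 'I_N, B d' -> g (1 * N%:R - d'%:R) <= g 1.
  by move=> d' _; apply: gmono; have := dle d'; lra.
have e := avg_eq n0 (gss 1) hle d Bd.
have g1 : g 1 <= g 2.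
  rewrite -e; apply: gmono; have := natle R _ _ _ dl; lra.
by apply/eqP; rewrite eq_le (le_trans g1 g2) pm_ge0.
Qed.

Arguments right_tail {R N B mu}.

Lemma left_tail (R : realType) (N : nat) (B : {ffun 'I_N -> bool}) (mu : probability R R) :
  is_digit_vector B -> self_similar B mu -> pm mu `]-oo, 0[%classic = 0.
Proof.
move=> dv ss.
have /and3P [N3 n2 nN] := dv.
have N0 : 0 < N%:R :> R by rewrite ltr0n; lia.
have n0 : (0 < digit_norm B)%N by lia.
pose g := fun a : R => pm mu `]-oo, a[%classic.
have mg (a : R) : measurable (`]-oo, a[%classic : set R) by exact: measurable_itv.
have gmono (a b : R) : a <= b -> g a <= g b.
  move=> ab; apply: pm_le => // x /=; rewrite !in_itv /= => h; exact: lt_le_trans h ab.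
have pre (a : R) (d : 'I_N) : phi N d @^-1` `]-oo, a[%classic = `]-oo, a * N%:R - d%:R[%classic.
  by rewrite predeqE => x /=; rewrite !in_itv /= /phi ltr_pdivrMr // ltrBrDr.
have gss (a : R) : g a = (digit_norm B)%:R^-1 * \sum_(d < N | B d) g (a * N%:R - d%:R).
  by rewrite /g (ss_real ss) //; congr (_ * _); apply: eq_bigr => d _; rewrite pre.
have step (a : R) : g a <= g (a * N%:R).
  apply: (avg_le n0 (gss a)) => d _; apply: gmono.
  have : 0 <= d%:R :> R by []. lra.
have iter k : g (-1) <= g (- (N ^ k)%:R).
  elim: k => [|k IH]; first by rewrite expn0.
  apply: (le_trans IH); apply: (le_trans (step _)).
  have -> : - (N ^ k)%:R * N%:R = - (N ^ k.+1)%:R :> R.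
    by rewrite expnS natrM; ring.
  by [].
have gk (m : nat) : g (-1) <= g (- m%:R).
  apply: (le_trans (iter m)); apply: gmono.
  have : (m < N ^ m)%N by apply: ltn_expl; lia.
  rewrite -(ltr_nat R) => h; lra.
have g2 : g (-1) <= 0.
  apply: (@lim0 R mu (fun m => `]-oo, - m%:R[%classic)) => //.
  - move=> n m nm x /=; rewrite !in_itv /= => h; apply: lt_le_trans h _.
    by rewrite lerN2 ler_nat.
  - rewrite predeqE => x; split => // h.
    have := h (Num.Def.archi_bound `|x|) I; rewrite /= in_itv /=.
    have := archi_boundP (normr_ge0 x); have := ler_norm (- x); rewrite normrN.
    lra.
have [d [Bd dl]] := digit_gt _ _ dv.
have hle : forall d' : 'I_N, B d' -> g (0 * N%:R - d'%:R) <= g 0.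
  by move=> d' _; apply: gmono; have : 0 <= d'%:R :> R by []; lra.
have e := avg_eq n0 (gss 0) hle d Bd.
have g1 : g 0 <= g (-1).
  rewrite -e; apply: gmono; have : 1 <= d%:R :> R by rewrite ler1n. lra.
by apply/eqP; rewrite eq_le (le_trans g1 g2) pm_ge0.
Qed.

Arguments left_tail {R N B mu}.

Lemma support (R : realType) (N : nat) (B : {ffun 'I_N -> bool}) (mu : probability R R) A :
  is_digit_vector B -> self_similar B mu -> measurable A ->
  pm mu A = pm mu (A `&` `[0, 1]%classic).
Proof.
move=> dv ss mA.
have mI : measurable (`[0, 1]%classic : set R) by exact: measurable_itv.
have mL : measurable (`]-oo, 0[%classic : set R) by exact: measurable_itv.
have mR : measurable (`]1, +oo[%classic : set R) by exact: measurable_itv.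
have mD : measurable (A `\` `[0, 1]%classic) by exact: measurableD.
have mAI : measurable (A `&` `[0, 1]%classic) by exact: measurableI.
have mU : measurable (`]-oo, 0[%classic `|` `]1, +oo[%classic : set R) by exact: measurableU.
have h1 : pm mu (A `\` `[0, 1]%classic) <= pm mu (`]-oo, 0[%classic `|` `]1, +oo[%classic).
  apply: pm_le => // x [_ /=]; rewrite !in_itv /= andbT => h.
  case: (ltrP x 0) => [x0|x0]; [by left | right].
  by move: h; rewrite x0 /= => /negP; rewrite -ltNge.
have h2 : pm mu (`]-oo, 0[%classic `|` `]1, +oo[%classic) <= 0.
  have : ((pm mu (`]-oo, 0[%classic `|` `]1, +oo[%classic))%:E <=
      (pm mu `]-oo, 0[%classic)%:E + (pm mu `]1, +oo[%classic)%:E)%E.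
    rewrite -(pmE mU) -(pmE mL) -(pmE mR); exact: measureU2.
  by rewrite (left_tail dv ss) (right_tail dv ss) addr0 lee_fin.
have : (pm mu A)%:E = ((pm mu (A `\` `[0, 1]%classic))%:E + (pm mu (A `&` `[0, 1]%classic))%:E)%E.
  rewrite -(pmE mA) -(pmE mD) -(pmE mAI); exact: measureDI.
move=> -[->].
have : pm mu (A `\` `[0, 1]%classic) = 0.
  by apply/eqP; rewrite eq_le pm_ge0 andbT (le_trans h1 h2).
by move=> ->; rewrite add0r.
Qed.

Arguments support {R N B mu A}.

Lemma pm0 (R : realType) (mu : probability R R) : pm mu set0 = 0.
Proof. by rewrite /pm measure0. Qed.

Arguments pm0 {R}.

Lemma pm01 (R : realType) (N : nat) (B : {ffun 'I_N -> bool}) (mu : probability R R) :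
  is_digit_vector B -> self_similar B mu -> pm mu `[0, 1]%classic = 1.
Proof.
move=> dv ss; rewrite -[RHS](pmT mu) (support dv ss measurableT) setTI //.
Qed.

Lemma p0 (R : realType) (N : nat) (B : {ffun 'I_N -> bool}) (mu : probability R R) :
  is_digit_vector B -> self_similar B mu -> pm mu [set 0] = 0.
Proof.
move=> dv ss.
have /and3P [N3 n2 nN] := dv.
have N0' : (0 < N)%N by lia.
have N0 : 0 < N%:R :> R by rewrite ltr0n.
have e := ss_real ss (measurable_set1 (0:R)).
have tE (d : 'I_N) : pm mu (phi N d @^-1` [set 0]) =
    if (nat_of_ord d == 0)%N then pm mu [set 0] else 0.
  rewrite (support dv ss (meas_pre (measurable_set1 0))).
  case: eqP => hd.
    congr (pm mu _); rewrite predeqE => x /=; rewrite /phi hd addr0 in_itv /=.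
    split; first by case=> h _; move: h => /(congr1 (fun y => y * N%:R)); rewrite mul0r divfK // gt_eqF.
    by move=> ->; rewrite mul0r lexx ler01.
  rewrite -[RHS](pm0 mu); congr (pm mu _); rewrite predeqE => x /=; rewrite /phi in_itv /=.
  split => // -[h /andP [x0 _]].
  move: h => /(congr1 (fun y => y * N%:R)). rewrite mul0r divfK ?gt_eqF // => h.
  have : 1 <= d%:R :> R by rewrite ler1n; lia.
  lra.
have hs : \sum_(d < N | B d) pm mu (phi N d @^-1` [set 0]) <= pm mu [set 0].
  rewrite (eq_bigr _ (fun d _ => tE d)).
  pose d0 := Ordinal N0'.
  case Bd0 : (B d0).
    rewrite (bigD1 d0) //= big1 ?addr0 // => i /andP [_ /negP ni].
    case: eqP => // h; exfalso; apply: ni; apply/eqP/val_inj; exact: h.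
  rewrite big1; first exact: pm_ge0.
  move=> i Bi; case: eqP => // h; exfalso.
  have ei : i = d0 by apply/val_inj; exact: h.
  by rewrite ei Bd0 in Bi.
have nR : 2 <= (digit_norm B)%:R :> R by rewrite ler_nat.
have rn : (digit_norm B)%:R^-1 * (digit_norm B)%:R = 1 :> R.
  by rewrite mulVf // gt_eqF // (lt_le_trans _ nR).
have r0 : 0 < (digit_norm B)%:R^-1 :> R by rewrite invr_gt0 (lt_le_trans _ nR).
have q0 := pm_ge0 mu [set 0].
move: e hs rn r0 q0 nR.
set q := pm mu [set 0]; set S := \sum_(_ < _ | _) _; set r := _^-1; set n := _%:R.
move=> e hs rn r0 q0 nR.
have : r <= 1/2 by nra.
move=> rh; apply/eqP; rewrite eq_le q0 andbT; nra.
Qed.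

Arguments p0 {R N B mu}.
Arguments pm01 {R N B mu}.

Lemma term (R : realType) (N : nat) (B : {ffun 'I_N -> bool}) (mu : probability R R)
  (k : nat) (d : 'I_N) : is_digit_vector B -> self_similar B mu ->
  pm mu (phi N d @^-1` `[0, k%:R / N%:R]%classic) = ((d < k)%N : nat)%:R.
Proof.
move=> dv ss.
have /and3P [N3 _ _] := dv.
have N0 : 0 < N%:R :> R by rewrite ltr0n; lia.
have Ni : 0 < N%:R^-1 :> R by rewrite invr_gt0.
rewrite (support dv ss (meas_pre (measurable_itv _))).
have d0 : 0 <= d%:R :> R by rewrite ler0n.
case: (ltngtP d k) => hdk.
- rewrite -[RHS](pm01 dv ss); congr (pm mu _).
  rewrite predeqE => x /=; rewrite /phi !in_itv /= pmulr_lge0 // ler_pM2r //.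
  have := natle R d 1 k ltac:(by rewrite addn1).
  move=> h; split => [[_ ->] //|/andP [a b]].
  by split; [apply/andP; split; lra | apply/andP].
- rewrite -[RHS](pm0 mu); congr (pm mu _).
  rewrite predeqE => x /=; rewrite /phi !in_itv /= pmulr_lge0 // ler_pM2r //.
  have := natle R k 1 d ltac:(by rewrite addn1).
  by move=> h; split => // -[/andP [_ a] /andP [b _]]; lra.
- rewrite -[RHS](p0 dv ss); congr (pm mu _).
  rewrite predeqE => x /=; rewrite /phi !in_itv /= pmulr_lge0 // ler_pM2r //.
  rewrite -hdk; split => [[/andP [_ a] /andP [b _]]|->]; first lra.
  by rewrite add0r lexx ler0n lexx ler01.
Qed.

Definition cnt (N : nat) (B : {ffun 'I_N -> bool}) (k : nat) : nat :=
  (\sum_(d < N) ((d < k)%N && B d))%N.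

Arguments cnt {N}.

Lemma cdf_val (R : realType) (N : nat) (B : {ffun 'I_N -> bool}) (mu : probability R R)
  (k : nat) : is_digit_vector B -> self_similar B mu ->
  cdf_mu mu (k%:R / N%:R) = ((cnt B k)%:R / (digit_norm B)%:R)%:E.
Proof.
move=> dv ss.
rewrite /cdf_mu (pmE (measurable_itv _)) (ss_real ss (measurable_itv _)).
rewrite (eq_bigr _ (fun d _ => term _ _ _ _ k d dv ss)) mulrC; congr ((_ * _)%:E).
rewrite /cnt -natr_sum big_mkcond /=; congr (_%:R); apply: eq_bigr => i _.
by case: (B i); rewrite ?andbT ?andbF.
Qed.

Lemma cnt0 (N : nat) (B : {ffun 'I_N -> bool}) : cnt B 0 = 0%N.
Proof. by rewrite /cnt big1. Qed.

Lemma cntS (N : nat) (B : {ffun 'I_N -> bool}) (i : 'I_N) :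
  cnt B i.+1 = (cnt B i + B i)%N.
Proof.
rewrite /cnt (bigD1 i) //= [in RHS](bigD1 i) //= ltnn ltnSn /= add0n addnC.
congr (_ + _)%N; apply: eq_bigr => d /negP dn.
rewrite ltnS leq_eqVlt; case: eqP => //= h; exfalso; apply: dn.
by apply/eqP/val_inj.
Qed.

Lemma cntN (N : nat) (B : {ffun 'I_N -> bool}) : cnt B N = digit_norm B.
Proof.
rewrite dnE -sum1_card big_mkcond /cnt /=; apply: eq_bigr => d _.
by rewrite ltn_ord inE; case: (B d).
Qed.

Lemma cnt_step (N : nat) (B : {ffun 'I_N -> bool}) (k : nat) :
  (k < N)%N -> (cnt B k <= cnt B k.+1 <= cnt B k + 1)%N.
Proof.
move=> kN; have := cntS _ B (Ordinal kN); rewrite /= => ->.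
by case: (B _); rewrite ?addn0 ?addn1 ?leqnn ?leqnSn.
Qed.

Lemma comb (N : nat) (B C : {ffun 'I_N -> bool}) :
  is_digit_vector B -> is_digit_vector C ->
  (forall k, (1 <= k <= N.-1)%N -> cnt B k * digit_norm C = cnt C k * digit_norm B)%N ->
  B = C.
Proof.
move=> dB dC H.
have /and3P [N3 nB2 nBN] := dB.
have /and3P [_ nC2 nCN] := dC.
have ex : exists k, (0 < cnt B k)%N by exists N; rewrite cntN; lia.
pose m := ex_minn ex.
have [Pm minm] : (0 < cnt B m)%N /\ (forall j, (0 < cnt B j)%N -> (m <= j)%N).
  by rewrite /m; case: ex_minnP.
have m0 : (0 < m)%N by case: (posnP m) Pm => // ->; rewrite cnt0.
have Bm1 : cnt B m.-1 = 0%N.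
  apply/eqP; rewrite -leqn0 leqNgt; apply/negP => h; have := minm _ h; lia.
have mN : (m <= N)%N.
  by apply: minm; rewrite cntN; lia.
have mN1 : (m <= N.-1)%N.
  case: (ltnP m N) => [|h]; first by lia.
  have em : m = N by lia.
  have := cnt_step _ B N.-1 ltac:(lia).
  have -> : N.-1.+1 = N by lia.
  have e2 : N.-1 = m.-1 by lia.
  rewrite cntN e2 Bm1; lia.
have stB := cnt_step _ B m.-1 ltac:(lia).
have stC := cnt_step _ C m.-1 ltac:(lia).
have em1 : m.-1.+1 = m by lia.
rewrite em1 in stB stC.
have Bm : cnt B m = 1%N by lia.
have Cm1 : cnt C m.-1 = 0%N.
  case: (posnP m.-1) => [->|h]; first exact: cnt0.
  have := H m.-1 ltac:(lia); rewrite Bm1 mul0n => /esym/eqP.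
  rewrite muln_eq0 => /orP [/eqP //|/eqP h0]; lia.
have Hm := H m ltac:(lia); rewrite Bm mul1n in Hm.
have Cm : cnt C m = 1%N by rewrite Cm1 in stC; nia.
rewrite Cm mul1n in Hm.
have eqk : forall k, (k <= N)%N -> cnt B k = cnt C k.
  move=> k kN.
  case: (posnP k) => [->|k0]; first by rewrite !cnt0.
  case: (eqVneq k N) => [->|kN']; first by rewrite !cntN.
  have := H k ltac:(lia); rewrite Hm => /eqP; rewrite eqn_pmul2r; last by lia.
  by move/eqP.
apply/ffunP => i.
have := cntS _ B i; have := cntS _ C i.
rewrite (eqk i.+1 (ltn_ord i)) (eqk i (ltnW (ltn_ord i))) => -> /eqP.
by rewrite eqn_add2l; case: (B i); case: (C i).
Qed.

Theorem theorem2p1 (R : realType) (N : nat) (B C : {ffun 'I_N -> bool})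
  (muB muC : probability R R) :
  is_digit_vector B -> is_digit_vector C ->
  self_similar B muB -> self_similar C muC ->
  (forall k : nat, (1 <= k <= N.-1)%N ->
     cdf_mu muB (k%:R / N%:R) = cdf_mu muC (k%:R / N%:R)) ->
  B = C.
Proof.
move=> dB dC sB sC H.
have /and3P [_ nB2 _] := dB.
have /and3P [_ nC2 _] := dC.
apply: (comb _ _ _ dB dC) => k hk.
have := H k hk; rewrite (cdf_val _ _ _ _ k dB sB) (cdf_val _ _ _ _ k dC sC) => -[e].
apply/eqP; rewrite -(eqr_nat R) !natrM -eqr_div.
- by rewrite e.
- by rewrite pnatr_eq0 -lt0n; apply: leq_trans nB2.
- by rewrite pnatr_eq0 -lt0n; apply: leq_trans nC2.
Qed.
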